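(* Let $R$ be a $*$-ring. Then $R$ is strongly $J$-$*$-clean if and only if (1) $R/J(R)$, with the induced involution $(a+J(R))^*=a^*+J(R)$, is $*$-Boolean; (2) $R$ is abelian; and (3) every idempotent lifts modulo $J(R)$.
   Context: All rings are associative with identity. A $*$-ring is a ring $R$ with an involution $*$, i.e. a map $a\mapsto a^*$ with $(a+b)^*=a^*+b^*$, $(ab)^*=b^*a^*$, $(a^* )^*=a$. $J(R)$ denotes the Jacobson radical of $R$; it satisfies $J(R)^*\subseteq J(R)$, so the quotient inherits an involution. A projection is an element $e$ with $e^2=e=e^*$. $R$ is strongly $J$-$*$-clean if every $a\in R$ can be written $a=e+u$ with $e$ a projection, $u\in J(R)$ and $ae=ea$. A $*$-ring is $*$-Boolean if every element is a projection. A ring is abelian if all its idempotents are central. Idempotents lift modulo $J(R)$ means: for every $x\in R$ with $x-x^2\in J(R)$ there is an idempotent $f\in R$ with $x-f\in J(R)$. *)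

(* Defs.v *)
From HB Require Import structures.
From mathcomp Require Import all_boot all_algebra.
Set Implicit Arguments. Unset Strict Implicit. Unset Printing Implicit Defensive.
Import GRing.Theory.
Local Open Scope ring_scope.

Definition involution (R : pzRingType) (star : R -> R) : Prop :=
  [/\ forall a b : R, star (a + b) = star a + star b,
      forall a b : R, star (a * b) = star b * star a
    & forall a : R, star (star a) = a].

Definition left_ideal (R : pzRingType) (I : R -> Prop) : Prop :=
  [/\ I 0,
      forall x y, I x -> I y -> I (x + y),
      forall x, I x -> I (- x)
    & forall r x, I x -> I (r * x)].

Definition maximal_left_ideal (R : pzRingType) (I : R -> Prop) : Prop :=
  [/\ left_ideal I, ~ I 1 &
      forall K : R -> Prop, left_ideal K -> ~ K 1 ->
        (forall x, I x -> K x) -> forall x, K x -> I x].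

Definition jacobson (R : pzRingType) (x : R) : Prop :=
  forall I : R -> Prop, maximal_left_ideal I -> I x.

Definition projection (R : pzRingType) (star : R -> R) (e : R) : Prop :=
  e * e = e /\ star e = e.

Definition strongly_J_star_clean (R : pzRingType) (star : R -> R) : Prop :=
  forall a : R, exists e u : R,
    [/\ projection star e, jacobson u, a = e + u & a * e = e * a].

(* R/J(R) with the induced involution is *-Boolean: every coset a + J(R) is a
   projection, i.e. (a+J)^2 = a+J and (a+J)^* = a^* + J = a+J, unfolded as
   membership of the differences in J(R). *)
Definition quotient_J_star_boolean (R : pzRingType) (star : R -> R) : Prop :=
  forall a : R, jacobson (a * a - a) /\ jacobson (star a - a).

Definition abelian_ring (R : pzRingType) : Prop :=
  forall e : R, e * e = e -> forall x : R, e * x = x * e.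

Definition idempotents_lift_mod_J (R : pzRingType) : Prop :=
  forall x : R, jacobson (x - x * x) ->
    exists f : R, f * f = f /\ jacobson (x - f).

(* Main.v *)
Require Import Defs.
From mathcomp Require Import all_boot all_algebra.
From mathcomp Require Import boolp classical_sets.
From Stdlib Require Classical_Prop.
Notation NNPP := Classical_Prop.NNPP.
Notation classic := Classical_Prop.classic.
Set Implicit Arguments. Unset Strict Implicit. Unset Printing Implicit Defensive.
Import GRing.Theory.
Local Open Scope ring_scope.

Section J.
Variable R : pzRingType.

Lemma J0 : @jacobson R 0.
Proof. by move=> I [[]]. Qed.
Lemma JD (x y : R) : jacobson x -> jacobson y -> jacobson (x + y).
Proof. by move=> Hx Hy I HI; case: (HI) => [[_ D _ _] _ _]; apply: D; [apply: Hx|apply: Hy]. Qed.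
Lemma JN (x : R) : jacobson x -> jacobson (- x).
Proof. by move=> Hx I HI; case: (HI) => [[_ _ N _] _ _]; apply: N; apply: Hx. Qed.
Lemma JB (x y : R) : jacobson x -> jacobson y -> jacobson (x - y).
Proof. by move=> Hx Hy; apply: JD => //; apply: JN. Qed.
Lemma JM (r x : R) : jacobson x -> jacobson (r * x).
Proof. by move=> Hx I HI; case: (HI) => [[_ _ _ M] _ _]; apply: M; apply: Hx. Qed.

Lemma ideal_of_inhab (P : set R -> Prop) (L : R -> Prop) X x :
  (P = fun A => A = set0 \/ [/\ left_ideal A, ~ A 1 & forall x, L x -> A x]) ->
  P X -> X x -> [/\ left_ideal X, ~ X 1 & forall x, L x -> X x].
Proof.
move=> -> [->|//] //.
Qed.

Lemma J_linv (j : R) : jacobson j -> exists v, v * (1 - j) = 1.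
Proof.
move=> Jj; apply: NNPP => nv.
pose L (x : R) : Prop := exists r, x = r * (1 - j).
have Lid : left_ideal L.
  split.
  - by exists 0; rewrite mul0r.
  - by move=> x y [r1 ->] [r2 ->]; exists (r1 + r2); rewrite mulrDl.
  - by move=> x [r1 ->]; exists (- r1); rewrite mulNr.
  - by move=> r x [r1 ->]; exists (r * r1); rewrite mulrA.
have L1 : ~ L 1 by move=> [r Hr]; apply: nv; exists r.
pose P (A : set R) := A = set0 \/ [/\ left_ideal A, ~ A 1 & forall x, L x -> A x].
have hP : P = fun A => A = set0 \/ [/\ left_ideal A, ~ A 1 & forall x, L x -> A x] by [].
have ZB : exists A, P A /\ forall B, proper A B -> ~ P B.
  apply: Zorn_bigcup.
  move=> F FP Ftot.
  case: (classic (exists X, F X /\ X <> set0)) => [[X0 [FX0 X0n]]|none].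
    have inh X x : F X -> X x -> [/\ left_ideal X, ~ X 1 & forall x, L x -> X x].
      by move=> FX Xx; apply: (ideal_of_inhab hP (FP _ FX) Xx).
    have [X0i X01 X0L] : [/\ left_ideal X0, ~ X0 1 & forall x, L x -> X0 x].
      by case: (FP _ FX0) => // ->.
    right; split.
    - split.
      + by exists X0 => //; case: X0i.
      + move=> x y [X1 FX1 X1x] [X2 FX2 X2y].
        have [[_ D1 _ _] _ _] := inh _ _ FX1 X1x.
        have [[_ D2 _ _] _ _] := inh _ _ FX2 X2y.
        case: (Ftot _ _ FX1 FX2) => [S12|S21].
          by exists X2 => //; apply: D2 => //; apply: S12.
        by exists X1 => //; apply: D1 => //; apply: S21.
      + move=> x [X1 FX1 X1x]; have [[_ _ N1 _] _ _] := inh _ _ FX1 X1x.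
        by exists X1 => //; apply: N1.
      + move=> r x [X1 FX1 X1x]; have [[_ _ _ M1] _ _] := inh _ _ FX1 X1x.
        by exists X1 => //; apply: M1.
    - by move=> [X1 FX1 X1x]; have [_ n1 _] := inh _ _ FX1 X1x; apply: n1.
    - by move=> x Lx; exists X0 => //; apply: X0L.
  left; rewrite predeqE => x; split => // -[X FX Xx].
  case: (FP _ FX) => [XE|[[X0 _ _ _] _ _]]; first by move: Xx; rewrite XE.
  by apply: none; exists X; split => // XE; move: X0; rewrite XE.
case: ZB => M [PM Mmax].
case: PM => [ME|[Mi M1 ML]].
  apply: (Mmax L); last by right; split => //.
  rewrite ME; split => // Ls; apply: (Ls 0); by case: Lid.
have Mmx : maximal_left_ideal M.
  split => // K Ki K1 MK x Kx; apply: NNPP => nMx.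
  apply: (Mmax K); last first.
    by right; split => // y Ly; apply: MK; apply: ML.
  by split => // KM; apply: nMx; apply: KM.
have Mj := Jj _ Mmx.
have Mj' : M (1 - j) by apply: ML; exists 1; rewrite mul1r.
case: Mi => _ D _ _; apply: M1.
by have := D _ _ Mj Mj'; rewrite addrC subrK.
Qed.

Lemma J_char (x : R) : (forall r, exists v, v * (1 - r * x) = 1) -> jacobson x.
Proof.
move=> H I [[I0 ID IN IM] n1 mx]; apply: NNPP => nIx.
pose K (y : R) := exists m r, I m /\ y = m + r * x.
have Ki : left_ideal K.
  split.
  - by exists 0, 0; rewrite mul0r addr0.
  - move=> y z [m1 [r1 [H1 ->]]] [m2 [r2 [H2 ->]]]; exists (m1 + m2), (r1 + r2).
    split; first by apply: ID.
    by rewrite mulrDl addrACA.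
  - move=> y [m1 [r1 [H1 ->]]]; exists (- m1), (- r1); split; first by apply: IN.
    by rewrite mulNr opprD.
  - move=> r y [m1 [r1 [H1 ->]]]; exists (r * m1), (r * r1); split; first by apply: IM.
    by rewrite mulrDr mulrA.
case: (classic (K 1)) => [[m [r [Im E]]]|nK1].
  have [v Hv] := H r; apply: n1; rewrite -Hv.
  apply: IM; have -> : 1 - r * x = m by rewrite E addrK.
  done.
apply: nIx; apply: (mx K Ki nK1).
  by move=> y Iy; exists y, 0; rewrite mul0r addr0.
by exists 0, 1; rewrite mul1r add0r.
Qed.

Lemma J_unit (j : R) : jacobson j -> forall r,
  exists w, w * (1 - r * j) = 1 /\ (1 - r * j) * w = 1.
Proof.
move=> Jj r; have [v Hv] := J_linv (JM r Jj).
exists v; split => //.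
have Ev : v = 1 - (- (v * r)) * j.
  have : v - (v * r) * j = 1 by rewrite -Hv mulrBr mulr1 mulrA.
  by move=> H1; rewrite mulNr opprK -{1}H1 subrK.
have [w Hw] := J_linv (JM (- (v * r)) Jj).
rewrite -Ev in Hw.
have Ew2 : w = 1 - r * j by rewrite -[w]mulr1 -{1}Hv mulrA Hw mul1r.
by rewrite -Ew2 Hw.
Qed.

Lemma JMr (x s : R) : jacobson x -> jacobson (x * s).
Proof.
move=> Jx; apply: J_char => r.
have [w [Hw1 Hw2]] := J_unit Jx (s * r).
exists (1 + r * x * w * s).
have H' := congr1 (fun t => r * x * t * s) Hw1; move: H' => /=.
rewrite !mulrBr !mulrBl !mulr1 !mulrA => H'.
by rewrite mulrDl mul1r !mulrDl -H' subrK addrK.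
Qed.

Lemma J_idem0 (p : R) : p * p = p -> jacobson p -> p = 0.
Proof.
move=> pp Jp; have [w [_ Hw]] := J_unit Jp 1.
by rewrite -[p]mulr1 -Hw mulrA mul1r mulrBr mulr1 pp subrr mul0r.
Qed.

Lemma idem_diff (f g : R) : f * f = f -> g * g = g -> f * g = g * f ->
  (f - f * g) * (f - f * g) = f - f * g.
Proof.
move=> ff gg fg.
have fgf : f * g * f = f * g by rewrite -mulrA -fg mulrA ff.
have ffg : f * (f * g) = f * g by rewrite mulrA ff.
have fgfg : f * g * (f * g) = f * g by rewrite mulrA fgf -mulrA gg.
by rewrite mulrBr !mulrBl ff fgf ffg fgfg subrr subr0.
Qed.

Lemma comm_idem_J (f g : R) : f * f = f -> g * g = g -> f * g = g * f ->
  jacobson (f - g) -> f = g.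
Proof.
move=> ff gg fg Jfg.
have E1 : f = f * g.
  apply/eqP; rewrite -subr_eq0; apply/eqP; apply: J_idem0.
    exact: idem_diff.
  by have := JM f Jfg; rewrite mulrBr ff.
have E2 : g = g * f.
  apply/eqP; rewrite -subr_eq0; apply/eqP; apply: J_idem0.
    exact: idem_diff.
  by have := JM g (JN Jfg); rewrite opprB mulrBr gg.
by rewrite E1 fg -E2.
Qed.
End J.

Section Star.
Variable R : pzRingType.
Variable star : R -> R.

Lemma star0 : involution star -> star 0 = 0.
Proof.
case=> sD _ _; apply: (@addrI _ (star 0)); by rewrite -sD !addr0.
Qed.

Lemma starN : involution star -> forall x, star (- x) = - star x.
Proof.
move=> inv x; have := star0 inv; case: inv => sD _ _.
move=> H0; have : star (x - x) = 0 by rewrite subrr.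
by rewrite sD => /eqP; rewrite addr_eq0 => /eqP ->; rewrite opprK.
Qed.

Lemma starB : involution star -> forall x y, star (x - y) = star x - star y.
Proof. by move=> inv x y; have [sD _ _] := inv; rewrite sD starN. Qed.

Lemma star1 : involution star -> star 1 = 1.
Proof.
case=> _ sM sK; have := sM (star 1) 1.
by rewrite mulr1 sK mulr1 => <-.
Qed.

Lemma Jstar : involution star -> forall x, jacobson x -> jacobson (star x).
Proof.
move=> inv x Jx; apply: J_char => r.
have [_ sM sK] := inv.
have [w [_ Hw]] := J_unit (JMr (star r) Jx) 1.
exists (star w).
have -> : 1 - r * star x = star (1 - 1 * (x * star r)).
  by rewrite starB // star1 // mul1r sM sK.
by rewrite -sM Hw star1.
Qed.

Lemma idem_proj : involution star -> strongly_J_star_clean star ->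
  forall e : R, e * e = e -> star e = e.
Proof.
move=> inv cl e ee; have [f [u [[ff sf] Ju E ef]]] := cl e.
have Ef : e = f.
  apply: comm_idem_J => //.
  by rewrite {1}E addrAC subrr add0r.
by rewrite Ef.
Qed.
End Star.

Lemma corner0 (R : pzRingType) (star : R -> R) : involution star ->
  strongly_J_star_clean star -> forall e x : R, e * e = e -> e * x * (1 - e) = 0.
Proof.
move=> inv cl e x ee; have [sD sM sK] := inv.
have se := idem_proj inv cl ee.
pose y := e * x * (1 - e).
have ye : y * e = 0 by rewrite /y -mulrA mulrBl mul1r ee subrr mulr0.
have ey : e * y = y by rewrite /y !mulrA ee.
have yy : y * y = 0 by rewrite {2}/y !mulrA ye !mul0r.
have gg : (e + y) * (e + y) = e + y by rewrite mulrDl !mulrDr ee ey ye yy !addr0.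
have sg := idem_proj inv cl gg.
have sy : star y = y by move: sg; rewrite sD se => /addrI.
have : star y = (1 - e) * (star x * e) by rewrite /y !sM starB // star1 // se.
rewrite sy => Ey; rewrite -/y -ey Ey mulrA mulrBr mulr1 ee subrr !mul0r //.
Qed.

Lemma abelian_of_clean (R : pzRingType) (star : R -> R) : involution star ->
  strongly_J_star_clean star -> abelian_ring R.
Proof.
move=> inv cl e ee x; have [sD sM sK] := inv.
have se := idem_proj inv cl ee.
have h1 := corner0 inv cl x ee.
have h2 := corner0 inv cl (star x) ee.
move: h1 h2; rewrite !mulrBr !mulr1 => /subr0_eq h1 /subr0_eq h2.
have : star (e * star x) = star (e * star x * e) by rewrite -h2.
rewrite !sM sK se => h3.
by rewrite h3 h1 mulrA.
Qed.

Theorem corollary3p8 (R : pzRingType) (star : R -> R) :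
  involution star ->
  (strongly_J_star_clean star <->
   [/\ quotient_J_star_boolean star, abelian_ring R & idempotents_lift_mod_J R]).
Proof.
move=> inv; have [sD sM sK] := inv; split.
- move=> cl; split.
  + move=> a; have [e [u [[ee se] Ju E ae]]] := cl a.
    rewrite E in ae *.
    have ue : u * e = e * u.
      by move: ae; rewrite mulrDl mulrDr ee => /addrI.
    split.
      rewrite mulrDl !mulrDr ee ue opprD addrACA (addrAC e) subrr add0r.
      by apply: JD; [exact: JM | apply: JB => //; apply: JD; exact: JM].
    rewrite sD se opprD addrACA subrr add0r.
    by apply: JB => //; apply: Jstar.
  + exact: abelian_of_clean inv cl.
  + move=> x _; have [e [u [[ee se] Ju E ae]]] := cl x.
    by exists e; split => //; rewrite E addrAC subrr add0r.
- case=> qb ab lift a.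
  have [Jaa _] := qb a.
  have Ja : jacobson (a - a * a) by have := JN Jaa; rewrite opprB.
  have [f [ff Jaf]] := lift a Ja.
  exists f, (a - f); split => //.
  + split => //; apply: comm_idem_J => //.
    * by rewrite -sM ff.
    * by apply: ab; rewrite -sM ff.
    * by have [] := qb f.
  + by rewrite addrC subrK.
  + by rewrite (ab f ff a).
Qed.
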